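(* Let $d\in\mathbb{N}$, $k\in\{1,\dots,d\}$, $\varepsilon>0$, and $\mathbf{e}_1,\mathbf{e}_2\in\mathbb{R}^d$. Define $$\psi_{feat}(\mathbf{e}_2):=\begin{cases}\max_{i\notin \mathrm{TopFeatures}(\mathbf{e}_1;k)}|e_{2i}| & (k<d),\\ -\varepsilon & (k=d),\end{cases}$$ and $$\ell_{\mathrm{Ftr}}(\mathbf{e}_2;\mathbf{e}_1,k):=\frac{1}{k}\sum_{i\in \mathrm{TopFeatures}(\mathbf{e}_1;k)}\max\big(0,\ \psi_{feat}(\mathbf{e}_2)-|e_{2i}|+\varepsilon\big).$$ Then $$1-\mathrm{FeatAgree}(\mathbf{e}_1,\mathbf{e}_2;k)\le \varepsilon^{-1}\,\ell_{\mathrm{Ftr}}(\mathbf{e}_2;\mathbf{e}_1,k).$$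
   Context: For $\mathbf{x}\in\mathbb{R}^d$, $\mathrm{rank}(\mathbf{x},i)$ denotes the position of index $i$ when the indices $1,\dots,d$ are ordered by descending $|x_i|$, i.e. $\mathrm{rank}(\mathbf{x},i)=|\{j\in[d]:|x_j|\ge|x_i|\}|$, with ties broken so that ranks form a permutation of $[d]$ (paper's convention: if $|x_i|=|x_j|$ with $i>j$ then $\mathrm{rank}(\mathbf{x},j)=\mathrm{rank}(\mathbf{x},i)+1$). $\mathrm{TopFeatures}(\mathbf{x};k):=\{i\in[d]:\mathrm{rank}(\mathbf{x},i)\le k\}$. The top-$k$ feature agreement is $\mathrm{FeatAgree}(\mathbf{e}_1,\mathbf{e}_2;k):=\frac1k\big|\{i\in[d]: i\in\mathrm{TopFeatures}(\mathbf{e}_1;k)\wedge i\in\mathrm{TopFeatures}(\mathbf{e}_2;k)\}\big|$. *)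

(* Defs.v *)
From mathcomp Require Import all_boot all_order all_algebra.
Set Implicit Arguments. Unset Strict Implicit. Unset Printing Implicit Defensive.
Import Order.TTheory GRing.Theory Num.Theory.
Local Open Scope ring_scope.

(* Vectors in R^d are rows 'rV[R]_d, indexed by 'I_d (0-based; the paper's
   index i corresponds to i.+1, the order of indices is preserved). *)

(* This is the paper's tie-breaking convention: if |x_i| = |x_j| and i > j
   then rank(x,j) = rank(x,i) + 1.  Ranks form a permutation of 1..d. *)
Definition rank_feat (R : realFieldType) (d : nat) (x : 'rV[R]_d) (i : 'I_d) : nat :=
  #|[set j : 'I_d | (`|x ord0 i| < `|x ord0 j|)
                  || ((`|x ord0 j| == `|x ord0 i|) && (i <= j)%N)]|.

Definition TopFeatures (R : realFieldType) (d : nat) (x : 'rV[R]_d) (k : nat)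
  : {set 'I_d} := [set i : 'I_d | (rank_feat x i <= k)%N].

Definition FeatAgree (R : realFieldType) (d : nat) (e1 e2 : 'rV[R]_d) (k : nat) : R :=
  (#|TopFeatures e1 k :&: TopFeatures e2 k|%:R) / k%:R.

(* Since all |e2_i| >= 0 and the index set is nonempty
   when k < d, using 0 as the neutral element of max is harmless. *)
Definition psi_feat (R : realFieldType) (d : nat) (e1 e2 : 'rV[R]_d) (k : nat)
  (eps : R) : R :=
  if (k < d)%N then \big[Num.max/0]_(i in ~: TopFeatures e1 k) `|e2 ord0 i|
  else - eps.

Definition loss_Ftr (R : realFieldType) (d : nat) (e1 e2 : 'rV[R]_d) (k : nat)
  (eps : R) : R :=
  k%:R^-1 * \sum_(i in TopFeatures e1 k)
              Num.max 0 (psi_feat e1 e2 k eps - `|e2 ord0 i| + eps).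

(* Main.v *)
Require Import Defs.
From mathcomp Require Import all_boot all_order all_algebra.
From mathcomp Require Import zify ring lra.
Import Order.TTheory GRing.Theory Num.Theory.
Local Open Scope ring_scope.

Section Aux.
Variables (R : realFieldType) (d : nat) (x : 'rV[R]_d).
Definition a (i : 'I_d) := `|x ord0 i|.
Definition geR (i j : 'I_d) : bool := (a i < a j) || ((a j == a i) && (i <= j)%N).
Definition Sset (i : 'I_d) : {set 'I_d} := [set j | geR i j].

Lemma rank_SsetE i : rank_feat x i = #|Sset i|.
Proof. by []. Qed.

Lemma geR_refl i : geR i i.
Proof. by rewrite /geR eqxx leqnn orbT. Qed.

Lemma geR_le i j : geR i j -> a i <= a j.
Proof. by rewrite /geR => /orP[/ltW|/andP[/eqP-> _]]. Qed.

Arguments geR_le [i j].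
Lemma geR_trans i j l : geR i j -> geR j l -> geR i l.
Proof.
rewrite /geR => /orP[h1|/andP[/eqP e1 h1]] /orP[h2|/andP[/eqP e2 h2]].
- by rewrite (lt_trans h1 h2).
- by rewrite e2 h1.
- by rewrite -e1 h2.
- by rewrite e2 e1 eqxx (leq_trans h1 h2) orbT.
Qed.

Lemma geR_total i j : geR i j || geR j i.
Proof.
rewrite /geR; case: (ltgtP (a i) (a j)) => //= e.
by rewrite ?e ?eqxx /= ?leq_total.

Qed.

Lemma geR_anti i j : geR i j -> geR j i -> i = j.
Proof.
rewrite /geR => /orP[h1|/andP[/eqP e1 h1]] /orP[h2|/andP[/eqP e2 h2]].
- by move: (lt_trans h1 h2); rewrite ltxx.
- by move: h1; rewrite e2 ltxx.
- by move: h2; rewrite e1 ltxx.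
- by apply: val_inj; apply/eqP; rewrite eqn_leq h1 h2.
Qed.

Lemma rank_lt i j : i != j -> geR i j -> (rank_feat x j < rank_feat x i)%N.
Proof.
move=> ne h; rewrite !rank_SsetE; apply: proper_card; rewrite properE.
apply/andP; split.
  by apply/subsetP=> l; rewrite !inE => hl; exact: geR_trans h hl.
apply/subsetPn; exists i; first by rewrite inE geR_refl.
by rewrite inE; apply/negP => h'; move: ne; rewrite (geR_anti _ _ h h') eqxx.
Qed.

Lemma rank_inj i j : rank_feat x i = rank_feat x j -> i = j.
Proof.
move=> e; case: (eqVneq i j) => // ne.
case/orP: (geR_total i j) => h.
  by move: (rank_lt _ _ ne h); rewrite e ltnn.
by rewrite eq_sym in ne; move: (rank_lt _ _ ne h); rewrite e ltnn.
Qed.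

Lemma rank_pos i : (0 < rank_feat x i)%N.
Proof. by rewrite rank_SsetE card_gt0; apply/set0Pn; exists i; rewrite inE geR_refl. Qed.

Lemma rank_le i : (rank_feat x i <= d)%N.
Proof. by rewrite rank_SsetE; apply: leq_trans (max_card _) _; rewrite card_ord. Qed.

Lemma card_Top k : (k <= d)%N -> #|TopFeatures x k| = k.
Proof.
move=> kd.
have fP i : ((rank_feat x i).-1 < d)%N.
  by have := rank_le i; have := rank_pos i; lia.
pose f i := Ordinal (fP i).
have finj : injective f.
  move=> i j /(congr1 val) /= e; apply: rank_inj.
  by have := rank_pos i; have := rank_pos j; lia.
have -> : TopFeatures x k = f @^-1: [set m : 'I_d | (m < k)%N].
  apply/setP=> i; rewrite !inE /=; have := rank_pos i; lia.
rewrite card_preimset //.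
have -> : [set m : 'I_d | (m < k)%N] = [set widen_ord kd m | m in 'I_k].
  apply/setP=> m; apply/idP/idP; rewrite inE.
    by move=> mk; apply/imsetP; exists (Ordinal mk) => //; apply: val_inj.
  by case/imsetP=> m' _ ->; rewrite /= ltn_ord.
rewrite card_imset ?card_ord //.
by move=> u v /(congr1 val) /= e; apply: val_inj.
Qed.

Lemma big_geR_card i : #|Sset i| = rank_feat x i.
Proof. by []. Qed.
End Aux.

Theorem lemma1 (R : realFieldType) (d k : nat) (eps : R) (e1 e2 : 'rV[R]_d) :
  (1 <= k)%N -> (k <= d)%N -> 0 < eps ->
  1 - FeatAgree e1 e2 k <= eps^-1 * loss_Ftr e1 e2 k eps.
Proof.
move=> k1 kd ep.
set T1 := TopFeatures e1 k; set T2 := TopFeatures e2 k.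
have c1 : #|T1| = k by apply: card_Top.
have key : forall i, i \in T1 -> i \notin T2 ->
    `|e2 ord0 i| <= psi_feat e1 e2 k eps.
  move=> i iT1 iT2; rewrite /psi_feat.
  case: ltnP => kd'; last first.
    move: iT2; rewrite inE; have := rank_le _ _ e2 i; lia.
  have : ~~ (@Sset _ _ e2 i \subset T1).
    apply/negP => /subset_leq_card; rewrite c1 -rank_SsetE.
    by move: iT2; rewrite inE; lia.
  case/subsetPn => j; rewrite inE => hj jT1.
  apply: le_trans (geR_le _ _ e2 _ _ hj) _.
  by apply: (le_bigmax_cond _ (j:=j)); rewrite inE.
have S : eps *+ #|T1 :\: T2| <= \sum_(i in T1)
    Num.max 0 (psi_feat e1 e2 k eps - `|e2 ord0 i| + eps).
  rewrite -sumr_const.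
  rewrite [X in _ <= X](bigID (fun i => i \in T2)) /=.
  rewrite [X in X <= _](eq_bigl (fun i => (i \in T1) && (i \notin T2))); last first.
    by move=> i; rewrite !inE andbC.
  rewrite -[X in X <= _]add0r; apply: lerD.
    by apply: sumr_ge0 => i _; rewrite le_max lexx.
  apply: ler_sum => i /andP[iT1 iT2]; rewrite le_max; apply/orP; right.
  have := key i iT1 iT2; lra.
rewrite /loss_Ftr /FeatAgree -/T1 -/T2.
move: S; rewrite cardsD c1.
have hk : (#|T1 :&: T2| <= k)%N.
  by rewrite -c1 subset_leq_card // subsetIl.
set n := #|T1 :&: T2|; set L := \sum_(i in T1) _.
have kp : 0 < k%:R :> R by rewrite ltr0n.
move=> S; move: S; rewrite -(mulr_natl eps (k - n)) natrB // => S.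
have ek : 0 < k%:R * eps by rewrite mulr_gt0.
have -> : eps^-1 * (k%:R^-1 * L) = L / (k%:R * eps).
  by rewrite invfM; ring.
rewrite ler_pdivlMr //.
have -> : (1 - n%:R / k%:R) * (k%:R * eps) = (k%:R - n%:R) * eps.
  by field; rewrite gt_eqF.
exact: S.
Qed.
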